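(* Let $M\subseteq\mathbb R^n$ be a bounded manifold admitting a carpeting function $\phi$. Let $V$ be a closed subset of $M$ such that $V\cap U$ has finitely many connected components for every open box $U\subseteq\mathbb R^n$. Then for every sequence $(r_\kappa)_{\kappa\in\mathbb N}$ of positive reals with $r_\kappa\to0$, the sequence $\big(V\cap\phi^{-1}(r_\kappa)\big)_\kappa$ converges to $\operatorname{fr}V$ in the Hausdorff sense, i.e. $\operatorname{fr}V=\lim_\kappa\big(V\cap\phi^{-1}(r_\kappa)\big)$.
   Context: A carpeting function on $M$ is a continuous proper map $\phi:M\to(0,\infty)$ such that $\phi(x)\to0$ as $x\to y$ for every $y$ in the frontier of $M$ taken in the one-point compactification $\mathbb R^n\cup\{\infty\}$. $\operatorname{fr}V=\operatorname{cl}V\setminus V$ (closure in $\mathbb R^n$). For bounded sets $A_\kappa\subseteq\mathbb R^n$, $\lim_\kappa A_\kappa=C$ means $\operatorname{cl}A_\kappa\to C$ in the Hausdorff metric on compact subsets of $\mathbb R^n$ (with $\emptyset$ included, at distance $\infty$ from nonempty sets). A box is a product of nonempty open intervals. *)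

(* Defs.v *)
From HB Require Import structures.
From mathcomp Require Import all_boot all_order all_algebra.
From mathcomp Require Import all_classical all_reals all_analysis.
Set Implicit Arguments. Unset Strict Implicit. Unset Printing Implicit Defensive.
Import Order.TTheory GRing.Theory Num.Theory.
Import numFieldNormedType.Exports.
Local Open Scope classical_set_scope.
Local Open Scope ring_scope.

(* Points of R^n are row vectors 'rV[R]_n (with the library's max-norm). *)

Definition bounded_in (R : realType) (n : nat) (A : set 'rV[R]_n) : Prop :=
  exists r : R, forall x, A x -> `|x| <= r.

Definition is_manifold (R : realType) (n : nat) (M : set 'rV[R]_n) : Prop :=
  exists d : nat, forall x, M x ->
    exists (U : set 'rV[R]_n) (W : set 'rV[R]_d)
           (f : 'rV[R]_n -> 'rV[R]_d) (g : 'rV[R]_d -> 'rV[R]_n),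
      open U /\ U x /\ open W /\
      {within M `&` U, continuous f} /\
      f @` (M `&` U) = W /\
      {within W, continuous g} /\
      (forall z, (M `&` U) z -> g (f z) = z) /\
      (forall w, W w -> (M `&` U) (g w) /\ f (g w) = w).

(* Carpeting function on M: continuous, positive, proper map M -> (0,oo),
   tending to 0 at every point of the frontier of M taken in the one-point
   compactification (points of cl M \ M, and the point at infinity when M is
   unbounded). *)
Definition carpeting (R : realType) (n : nat) (M : set 'rV[R]_n)
    (phi : 'rV[R]_n -> R) : Prop :=
  [/\ {within M, continuous phi},
      (forall x, M x -> 0 < phi x),
      (forall K : set R, compact K -> K `<=` [set t | 0 < t] ->
          compact (M `&` phi @^-1` K)),
      (forall y, (closure M `\` M) y ->
          forall e : R, 0 < e -> exists2 dl : R, 0 < dl &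
            forall x, M x -> `|x - y| < dl -> phi x < e) &
      (~ bounded_in M ->
          forall e : R, 0 < e -> exists r0 : R,
            forall x, M x -> r0 < `|x| -> phi x < e)].

Definition open_box (R : realType) (n : nat) (U : set 'rV[R]_n) : Prop :=
  exists a b : 'I_n -> R, (forall i, a i < b i) /\
    U = [set x | forall i, a i < x ord0 i < b i].

Definition finitely_many_components (R : realType) (n : nat)
    (A : set 'rV[R]_n) : Prop :=
  finite_set [set connected_component A x | x in A].

Definition frontier_set (R : realType) (n : nat) (V : set 'rV[R]_n) :=
  closure V `\` V.

(* lim_k A_k = C : C is compact and cl A_k -> C in the Hausdorff metric
   (with the empty set at distance oo from nonempty sets). *)
Definition hausdorff_lim (R : realType) (n : nat)
    (A : nat -> set 'rV[R]_n) (C : set 'rV[R]_n) : Prop :=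
  compact C /\
  forall e : R, 0 < e -> \forall k \near \oo,
    (forall x, closure (A k) x -> exists2 y, C y & `|x - y| < e) /\
    (forall y, C y -> exists2 x, closure (A k) x & `|x - y| < e).

(* Main.v *)
Require Import Defs.
From HB Require Import structures.
From mathcomp Require Import all_boot all_order all_algebra.
From mathcomp Require Import all_classical all_reals all_analysis.
From mathcomp Require Import lra.
Import Order.TTheory GRing.Theory Num.Theory.
Import numFieldNormedType.Exports.
Local Open Scope classical_set_scope.
Local Open Scope ring_scope.
Lemma normrv_lt (R : realType) n (x y : 'rV[R]_n) e :
  `|x - y| < e <-> 0 < e /\ forall i, `|x ord0 i - y ord0 i| < e.
Proof.
have H : ball x e y <-> `|x - y| < e by rewrite mx_norm_ball.
rewrite -H; split.
  case=> e0 Hb; split => // i; have := Hb ord0 i; by rewrite /ball/=.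
case=> e0 Hb; split => // i j; rewrite (ord1 i) /ball/=; exact: Hb.
Qed.
Lemma closure_pt (R : realType) n (A : set 'rV[R]_n) x e :
  closure A x -> 0 < e -> exists2 y, A y & `|x - y| < e.
Proof.
move=> cl e0; have [y [Ay By]] := cl _ (nbhsx_ballx x e e0).
by exists y => //; move: By; rewrite -ball_normE.
Qed.

Lemma cont_pt (R : realType) n (M : set 'rV[R]_n) (phi : 'rV[R]_n -> R) x e :
  {within M, continuous phi} -> M x -> 0 < e ->
  exists2 d, 0 < d & forall z, M z -> `|x - z| < d -> `|phi x - phi z| < e.
Proof.
move=> /subspace_continuousP /(_ x) H Mx e0.
have /cvgrPdist_lt /(_ e e0) := H Mx.
rewrite near_withinE => /nbhs_normP [d d0 Hd].
exists d => // z Mz xz; by apply: Hd.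

Qed.

Lemma bounded_of (R : realType) n (A : set 'rV[R]_n) r :
  (forall x, A x -> `|x| <= r) -> bounded_set A.
Proof.
move=> H; rewrite /= /bounded_near; near=> M => x Ax.
apply: le_trans (H x Ax) _. near: M. exact: nbhs_pinfty_ge (num_real r).
Unshelve. all: by end_near.
Qed.
Lemma seq_pick (R : realType) (T : eqType) (P : R -> T -> Prop) (s : seq T) :
  (forall e e' A, e <= e' -> P e A -> P e' A) ->
  (forall e, 0 < e -> exists2 A, A \in s & P e A) ->
  exists2 A, A \in s & forall e, 0 < e -> P e A.
Proof.
move=> mono; elim: s => [|a s IH] H.
  by have [A] := H 1 ltr01; rewrite in_nil.
have [Ha|Ha] := pselect (forall e, 0 < e -> P e a).
  by exists a => //; rewrite mem_head.
have [e0 He0] : exists e0, 0 < e0 /\ ~ P e0 a.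
  apply: contrapT => Hn; apply: Ha => e e0; apply: contrapT => Pn.
  by apply: Hn; exists e.
case: He0 => e0pos nP.
have [|A As PA] := IH; last by exists A => //; rewrite in_cons As orbT.
move=> e epos.
have mpos : 0 < Num.min e e0 by rewrite lt_min epos e0pos.
have [A] := H _ mpos; rewrite in_cons => /orP [/eqP ->|As] PA.
  by exfalso; apply: nP; apply: mono PA; rewrite ge_min lexx orbT.
by exists A => //; apply: mono PA; rewrite ge_min lexx.
Qed.

Lemma fin_pick (R : realType) (T : choiceType) (F : set T) (P : R -> T -> Prop) :
  finite_set F ->
  (forall e e' A, e <= e' -> P e A -> P e' A) ->
  (forall e, 0 < e -> exists2 A, F A & P e A) ->
  exists2 A, F A & forall e, 0 < e -> P e A.
Proof.
move=> /finite_fsetP [X ->] mono H.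
have [|A AX PA] := @seq_pick R T P (finmap.enum_fset X) mono.
  by move=> e e0; have [A AX PA] := H e e0; exists A.
by exists A.
Qed.
Lemma pos_lb (R : realType) (K : set R) :
  closed K -> (forall s, K s -> 0 < s) -> exists2 m, 0 < m & forall s, K s -> m <= s.
Proof.
move=> Kc Kp.
have nK0 : ~ closure K 0 by move=> /Kc /Kp; rewrite ltxx.
have [B [nB KB]] : exists B, nbhs (0:R) B /\ ~ (K `&` B !=set0).
  apply: contrapT => H; apply: nK0 => B nB; apply: contrapT => KB.
  by apply: H; exists B.
have [m m0 mB] := (nbhs_ballP _ _).1 nB.
exists m => // s Ks; rewrite leNgt; apply/negP => sm.
apply: KB; exists s; split => //; apply: mB.
by rewrite /ball/= sub0r normrN gtr0_norm ?Kp.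
Qed.

Lemma comp_ivt (R : realType) n (C : set 'rV[R]_n) (phi : 'rV[R]_n -> R) c t :
  connected C -> {within C, continuous phi} -> C c ->
  (forall e, 0 < e -> exists2 x, C x & phi x < e) -> 0 < t -> t <= phi c ->
  exists2 x, C x & phi x = t.
Proof.
move=> Cc phic Cc0 small t0 tc.
have /connected_intervalP Ii := connected_continuous_connected Cc phic.
have [x Cx xt] := small t t0.
have : (phi @` C) t.
  apply: (Ii (phi x) (phi c)); [by exists x|by exists c|].
  by rewrite tc ltW.
by case=> z Cz <-; exists z.
Qed.

Arguments closure_pt {R n A x e}.
Arguments cont_pt {R n M phi x e}.
Arguments comp_ivt {R n C phi c t}.
Arguments normrv_lt {R n x y e}.

Theorem lemma1p7 (R : realType) (n : nat) (M : set 'rV[R]_n)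
    (phi : 'rV[R]_n -> R) (V : set 'rV[R]_n) :
  is_manifold M -> bounded_in M -> carpeting M phi ->
  V `<=` M -> closure V `&` M `<=` V ->
  (forall U : set 'rV[R]_n, open_box U -> finitely_many_components (V `&` U)) ->
  forall r : nat -> R, (forall k, 0 < r k) -> r @ \oo --> 0 ->
    hausdorff_lim (fun k => V `&` phi @^-1` [set r k]) (frontier_set V).
Proof.
move=> _ [r0 hb] [hcont hpos _ hfront _] VM Vcl hfin r rpos rcvg.
set fr := frontier_set V.
have frM : forall y, fr y -> ~ M y.
  by move=> y [cy nVy] My; apply: nVy; apply: Vcl.
have frcM : forall y, fr y -> (closure M `\` M) y.
  move=> y fy; split; last exact: frM.
  by apply: (closureS VM); case: fy.
have clM_bd : forall x, closure M x -> `|x| <= r0 + 1.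
  move=> x cx; have [y My xy] := closure_pt cx ltr01.
  have := hb y My; have := ler_normD (x - y) y; rewrite subrK => h1 h2.
  lra.
have frclosed : closed fr.
  move=> z cz.
  have cVz : closure V z.
    by apply: closed_closure; apply: (closureS _ cz) => y [].
  split => // Vz.
  have Mz := VM _ Vz; have pz := hpos _ Mz.
  have h2 : 0 < phi z / 2 by rewrite divr_gt0.
  have [d d0 hd] := cont_pt hcont Mz h2.
  have d2 : 0 < d / 2 by rewrite divr_gt0.
  have [y fy zy] := closure_pt cz d2.
  have [dl dl0 hdl] := hfront y (frcM y fy) _ h2.
  have md : 0 < Num.min dl (d/2) by rewrite lt_min dl0 d2.
  have [x Vx yx] := closure_pt (proj1 fy) md.
  have Mx := VM _ Vx.
  have yx1 : `|y - x| < dl by apply: lt_le_trans yx _; rewrite ge_min lexx.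
  have yx2 : `|y - x| < d / 2 by apply: lt_le_trans yx _; rewrite ge_min lexx orbT.
  have h1 : phi x < phi z / 2 by apply: hdl => //; rewrite distrC.
  have h3 : `|phi z - phi x| < phi z / 2.
    apply: hd => //; have := ler_distD y z x; lra.
  have := ler_norm (phi z - phi x); lra.
have frcomp : compact fr.
  apply: bounded_closed_compact => //; apply: (@bounded_of _ _ _ (r0 + 1)).
  by move=> x [cx _]; apply: clM_bd; exact: closureS VM _ cx.
split => // e e0.
have e2 : 0 < e / 2 by rewrite divr_gt0.
pose S := closure V `\` \bigcup_(y in fr) ball y (e/2).
have SM : S `<=` M.
  move=> x [cx nb]; apply: VM; apply: contrapT => nVx; apply: nb.
  by exists x; [split|exact: ballxx].
have Sc : compact S.
  apply: bounded_closed_compact.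
    apply: (@bounded_of _ _ _ (r0 + 1)) => x [cx _]; apply: clM_bd.
    exact: closureS VM _ cx.
  apply: closedI; first exact: closed_closure.
  rewrite closedC; apply: bigcup_open => y _; exact: ball_open.
have [m m0 hm] : exists2 m, 0 < m & forall s, S s -> m <= phi s.
  have [||m m0 hm] := @pos_lb R (phi @` S).
  - apply: compact_closed; first exact: Rhausdorff.
    apply: continuous_compact => //; exact: continuous_subspaceW SM hcont.
  - by move=> _ [s Ss <-]; apply: hpos; apply: SM.
  by exists m => // s Ss; apply: hm; exists s.
have Hm : \forall k \near \oo, `|0 - r k| < m by apply: cvgr_dist_lt.
have Q : forall y, fr y -> \forall k \near \oo,
    exists2 x, (V `&` phi @^-1` [set r k]) x & `|x - y| < e/2.
  move=> y fy.
  pose U := [set x : 'rV[R]_n | forall i, y ord0 i - e/2 < x ord0 i < y ord0 i + e/2].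
  have Ub : open_box U.
    exists (fun i => y ord0 i - e/2), (fun i => y ord0 i + e/2); split => // i.
    lra.
  have inU : forall x, `|x - y| < e/2 -> U x.
    by move=> x /normrv_lt [_ h] i; rewrite -ltr_distl; exact: h i.
  have inU' : forall x, U x -> `|x - y| < e/2.
    by move=> x Ux; apply/normrv_lt; split => // i; rewrite ltr_distl; exact: Ux i.
  have [C FC small] : exists2 C,
      [set connected_component (V `&` U) x | x in V `&` U] C &
      forall e, 0 < e -> exists2 x, C x & phi x < e.
    apply: (@fin_pick R _ _ (fun e C => exists2 x, C x & phi x < e) (hfin U Ub)).
  - by move=> e1 e1' C le [x Cx px]; exists x => //; exact: lt_le_trans px le.
  - move=> e' e'0; have [dl dl0 hdl] := hfront y (frcM y fy) e' e'0.
    have md : 0 < Num.min dl (e/2) by rewrite lt_min dl0 e2.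
    have [x Vx yx] := closure_pt (proj1 fy) md.
    have xU : U x.
      by apply: inU; rewrite distrC; apply: lt_le_trans yx _; rewrite ge_min lexx orbT.
    exists (connected_component (V `&` U) x); first by exists x.
    exists x; first by apply: connected_component_refl.
    apply: hdl; first exact: VM.
    by rewrite distrC; apply: lt_le_trans yx _; rewrite ge_min lexx.
  case: FC => c0 [Vc0 Uc0] Ceq; subst C.
  have t0 := hpos c0 (VM c0 Vc0).
  have Hr : \forall k \near \oo, `|0 - r k| < phi c0 by apply: cvgr_dist_lt.
  near=> k.
  have rk : r k < phi c0.
    by near: k; apply: filterS Hr => j; rewrite sub0r normrN gtr0_norm.
  have CM : connected_component (V `&` U) c0 `<=` M.
    by move=> z /connected_component_sub [Vz _]; exact: VM.
  have [x Cx px] := comp_ivt (@component_connected _ (V `&` U) c0)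
    (continuous_subspaceW CM hcont)
    (connected_component_refl (conj Vc0 Uc0)) small (rpos k) (ltW rk).
  have [Vx Ux] := connected_component_sub Cx.
  by exists x; [split|apply: inU'].
have frcov := frcomp; rewrite compact_cover in frcov.
have [D' D'fr cov] := frcov _ fr (fun y => ball y (e/2))
  (fun y _ => ball_open y (e/2)) (fun y fy => ex_intro2 _ (fun i => ball i (e/2) y) y fy (ballxx y e2)).
have Qall := @filter_bigI _ _ D'
  (fun y => [set k | exists2 x, (V `&` phi @^-1` [set r k]) x & `|x - y| < e/2])
  _ _ (fun i Hi => Q i (set_mem (D'fr i Hi))).
near=> k; split.
- move=> x clx; have [a [Va pa] xa] := closure_pt clx e2.
  have nS : ~ S a.
    move=> Sa; have := hm a Sa; rewrite pa.
    have h1 : r k < m.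
      by near: k; apply: filterS Hm => j; rewrite sub0r normrN gtr0_norm.
    move=> h2.
    by have := lt_le_trans h1 h2; rewrite ltxx.
  have [y fy bya] : exists2 y, fr y & ball y (e/2) a.
    apply: contrapT => H; apply: nS; split; first exact: subset_closure.
    by case=> y fy bya; apply: H; exists y.
  exists y => //; move: bya; rewrite -ball_normE /= => ya.
  have := ler_distD a x y; rewrite (distrC a y); lra.
- near: k; apply: filterS (Qall _) => k Hk y fy.
  have [y' y'D yy'] := cov y fy.
  have [x Ax xy'] := Hk y' y'D.
  exists x; first exact: subset_closure.
  move: yy'; rewrite -ball_normE /= => yy'.
  have h := ler_distD y' x y; rewrite (distrC y' y) in h; apply: le_lt_trans h _.
  have -> : e = e/2 + e/2 by rewrite -splitr.
  by rewrite ltrD // distrC.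
Unshelve. all: by end_near.
Qed.
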